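(* Let $n$ be even, let $d\ge3$ be odd, and let $r$ be a positive integer with $r(r-1)<n$. Fix a coordinate direction $k\in\{1,\dots,d-1\}$ and $r$ consecutive values $j,j+1,\dots,j+r-1$ of that coordinate. Let $P\in\Lambda_1(d,n)$ be such that the Latin hypercube $\mathcal H(P)$ agrees with $C_{d-1,n}$ at every cell whose $k$-th coordinate is not among $j,\dots,j+r-1$ (i.e. it agrees with $C_{d-1,n}$ outside these $r$ consecutive hyperplanes). Then $\operatorname{Per}(P)=0$. Furthermore, if $P_1,\dots,P_m\in\Lambda_1(d,n)$ all have this property (for the same fixed $r$ hyperplanes), then every linear combination $a_1P_1+\cdots+a_mP_m$ has permanent $0$.
   Context: Let $I_n=\{1,\dots,n\}$. A $d$-dimensional matrix of order $n$ is a function $I_n^d\to\mathbb R$. A diagonal is a selection of $n$ positions of $I_n^d$ any two of which differ in every coordinate; the permanent $\operatorname{Per}(A)$ is the sum over all diagonals of the product of the entries of $A$ at those positions. A line is the set of positions obtained by varying one coordinate and fixing the others. $\Lambda_1(d,n)$ is the set of $(0,1)$-valued $d$-dimensional matrices of order $n$ with exactly one $1$ in each line. A Latin hypercube of dimension $m$ and order $n$ is a function $H:I_n^m\to I_n$ in which every line contains each symbol exactly once. For $P\in\Lambda_1(d,n)$, $\mathcal H(P)$ is the Latin hypercube of dimension $d-1$ with $\mathcal H(P)(i_1,\dots,i_{d-1})=i_d$ iff $P(i_1,\dots,i_d)=1$. The cyclic Latin hypercube $C_{m,n}$ is defined by $C_{m,n}(x_1,\dots,x_m)\equiv x_1+\cdots+x_m\pmod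 n$, with value taken in $I_n$. A hyperplane of $\mathcal H(P)$ is the set of cells with one coordinate fixed. *)

(* Defs.v *)
From HB Require Import structures.
From mathcomp Require Import all_boot all_order all_algebra.
From mathcomp Require Import reals.
Set Implicit Arguments. Unset Strict Implicit. Unset Printing Implicit Defensive.
Import Order.TTheory GRing.Theory Num.Theory.
Local Open Scope ring_scope.

(* Conventions: coordinates are indexed 0..d-1 (paper: 1..d) and values
   are in 'I_n = {0..n-1} (paper: I_n = {1..n}); value v here is v+1 in the paper. *)

Definition pos (d n : nat) := {ffun 'I_d -> 'I_n}.

Definition mat (R : Type) (d n : nat) := pos d n -> R.

Definition is_diagonal (d n : nat) (D : {set pos d n}) : bool :=
  (#|D| == n) &&
  [forall x in D, forall y in D, (x != y) ==> [forall i, x i != y i]].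

Definition Per (R : realType) (d n : nat) (A : mat R d n) : R :=
  \sum_(D : {set pos d n} | is_diagonal D) \prod_(x in D) A x.

Definition line (d n : nat) (i : 'I_d) (x : pos d n) : {set pos d n} :=
  [set y : pos d n | [forall l, (l != i) ==> (y l == x l)]].

Definition Lambda1 (R : realType) (d n : nat) (A : mat R d n) : Prop :=
  (forall x, A x = 0 \/ A x = 1) /\
  (forall (i : 'I_d) (x : pos d n), #|[set y in line i x | A y == 1]| = 1%N).

Definition cell (d n : nat) := {ffun 'I_d.-1 -> 'I_n}.

(* the position (c_1, ..., c_{d-1}, v) *)
Definition extend (d n : nat) (c : cell d n) (v : 'I_n) : pos d n :=
  [ffun i : 'I_d => match insub (val i) : option 'I_d.-1 with
                    | Some i' => c i'
                    | None => v end].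

(* H(P)(c) = the v with P(c, v) = 1 (well defined for P in Lambda1) *)
Definition HP (R : realType) (d n : nat) (P : mat R d n) (c : cell d n) : option 'I_n :=
  [pick v : 'I_n | P (extend c v) == 1].

(* cyclic Latin hypercube C_{d-1,n}: 1-based value = sum of 1-based coords mod n,
   in 0-based terms ((sum_i (c_i + 1)) + n - 1) mod n. *)
Definition Ccyc (d n : nat) (c : cell d n) : nat :=
  ((\sum_(i < d.-1) (c i).+1) + n - 1) %% n.

Definition agrees_outside (R : realType) (d n : nat) (k : 'I_d.-1) (j r : nat)
    (P : mat R d n) : Prop :=
  forall c : cell d n, ~~ ((j <= c k) && (c k < j + r))%N ->
    omap val (HP P c) = Some (Ccyc c).

(* Main.v *)
Require Import Defs.
From HB Require Import structures.
From mathcomp Require Import all_boot all_order all_algebra.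
From mathcomp Require Import reals.
From mathcomp Require Import zify ring.
Import Order.TTheory GRing.Theory Num.Theory.
Local Open Scope ring_scope.

Definition wid (p : nat) (i : 'I_p) : 'I_p.+1 := widen_ord (leqnSn p) i.
Arguments wid {p}.
Definition cellof (p n : nat) (x : pos p.+1 n) : cell p.+1 n := [ffun i : 'I_p => x (wid i)].
Definition Tsum (p n : nat) (x : pos p.+1 n) : nat := (\sum_(i < p) x (wid i))%N.
Arguments cellof {p n}.
Arguments Tsum {p n}.

Lemma ord_split (p : nat) (i : 'I_p.+1) : i = ord_max \/ exists i', i = wid i'.
Proof.
case: (ltnP i p) => h; [right; exists (Ordinal h) | left]; apply: val_inj => //=.
have := ltn_ord i; lia.
Qed.

Lemma wid_inj p : injective (@wid p).
Proof. by move=> a b /(congr1 val) /= e; apply: val_inj. Qed.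

Lemma wid_neq p (i : 'I_p) : wid i != ord_max.
Proof. by rewrite -(inj_eq val_inj) /= neq_ltn ltn_ord. Qed.

Lemma extend_wid p n (c : cell p.+1 n) v (i : 'I_p) : extend c v (wid i) = c i.
Proof.
rewrite /extend ffunE; case: insubP => [i' _ e|]; last by rewrite /= ltn_ord.
by congr (c _); apply: val_inj; rewrite e.
Qed.

Lemma extend_max p n (c : cell p.+1 n) v : extend c v ord_max = v.
Proof. by rewrite /extend ffunE; case: insubP => [i' /= |//]; rewrite ltnn. Qed.

Lemma pos_eq p n (x y : pos p.+1 n) :
  (forall i, x (wid i) = y (wid i)) -> x ord_max = y ord_max -> x = y.
Proof.
move=> h1 h2; apply/ffunP => i. have [e|[i' e]] := @ord_split p i; rewrite e; [exact: h2 | exact: h1].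
Qed.

Lemma extend_cellof p n (x : pos p.+1 n) : extend (cellof x) (x ord_max) = x.
Proof.
apply: (@pos_eq p n) => [i|]; by rewrite ?extend_wid ?extend_max ?ffunE.
Qed.

Lemma Ccyc_cellof p n (x : pos p.+1 n) : Ccyc (cellof x) = ((Tsum x + p + n - 1) %% n)%N.
Proof.
rewrite /Ccyc /Tsum; congr (_ %% _)%N.
under eq_bigr do rewrite ffunE -addn1.
by rewrite big_split /= sum1_card card_ord.
Qed.

Lemma in_line d n (i : 'I_d) (x y : pos d n) :
  (forall l, l != i -> y l = x l) -> y \in line i x.
Proof. by move=> h; rewrite inE; apply/forallP => l; apply/implyP => /h ->. Qed.

Lemma line_uniq (R : realType) d n (P : mat R d n) (HL : Lambda1 P) i (x y : pos d n) :
  y \in line i x -> P x = 1 -> P y = 1 -> y = x.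
Proof.
move=> yl Px Py; have := HL.2 i x; move/eqP/cards1P => [z hz].
have xin : x \in [set y in line i x | P y == 1].
  by rewrite inE Px eqxx andbT; apply: in_line.
have yin : y \in [set y in line i x | P y == 1] by rewrite inE Py eqxx andbT.
by move: xin yin; rewrite hz !inE => /eqP -> /eqP ->.
Qed.
Definition ins p n (k : 'I_p) (j r : nat) (x : pos p.+1 n) : bool := (j <= x (wid k) < j + r)%N.
Arguments ins {p n}.
Definition sv p n (k : 'I_p) (x : pos p.+1 n) : nat := (Tsum x - x (wid k) + p.-1)%N.
Arguments sv {p n}.
Definition cp p n (k : 'I_p) (x : pos p.+1 n) : nat := ((x ord_max + n - sv k x %% n) %% n)%N.
Arguments cp {p n}.

Lemma Tsum_split p n (k : 'I_p) (x : pos p.+1 n) :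
  Tsum x = (x (wid k) + \sum_(i < p | i != k) x (wid i))%N.
Proof. by rewrite /Tsum (bigD1 k). Qed.

Lemma modhelp a b n : (0 < n)%N -> (b < n)%N -> ((a + (b + n - a %% n) %% n + n) %% n = b)%N.
Proof.
move=> n0 bn; rewrite modnDr modnDmr.
have h1 := divn_eq a n; have h2 := ltn_pmod a n0.
have -> : (a + (b + n - a %% n) = (a %/ n).+1 * n + b)%N.
  rewrite mulSn; lia.
by rewrite modnMDl modn_small.
Qed.

Lemma outside_good (R : realType) p n (k : 'I_p) (j r : nat) (P : mat R p.+1 n)
  (HL : Lambda1 P) (HA : @agrees_outside R p.+1 n k j r P) (x : pos p.+1 n) :
  P x = 1 -> ~~ ins k j r x -> (val (x ord_max) = (Tsum x + p + n - 1) %% n)%N.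
Proof.
move=> Px nin; have := HA (cellof x); rewrite ffunE => /(_ nin).
rewrite Ccyc_cellof /HP; case: pickP => [w /eqP Pw|] //= [<-].
have e : extend (cellof x) w = x.
  apply: (@line_uniq R p.+1 n P HL ord_max) => //.
  apply: in_line => l nl; have [e|[i' e]] := @ord_split p l.
    by rewrite e eqxx in nl.
  by rewrite e extend_wid ffunE.
by rewrite -{1}e extend_max.
Qed.

Lemma inside_good (R : realType) p n (k : 'I_p) (j r : nat) (P : mat R p.+1 n)
  (HL : Lambda1 P) (HA : @agrees_outside R p.+1 n k j r P) (x : pos p.+1 n) :
  (0 < p)%N -> P x = 1 -> ins k j r x -> (j <= cp k x < j + r)%N.
Proof.
move=> p0 Px xin; apply/negPn/negP => nin.
have n0 : (0 < n)%N := leq_ltn_trans (leq0n _) (ltn_ord (x ord_max)).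
have cpn : (cp k x < n)%N by rewrite /cp ltn_pmod.
pose c' : 'I_n := Ordinal cpn.
pose y : pos p.+1 n := [ffun i => if i == wid k then c' else x i].
have yk : y (wid k) = c' by rewrite ffunE eqxx.
have yo : forall i, i != wid k -> y i = x i by move=> i /negbTE h; rewrite ffunE h.
have yl : y \in line (wid k) x by apply: in_line.
have Ty : (Tsum y + x (wid k) = Tsum x + c')%N.
  rewrite (@Tsum_split p n k x) (@Tsum_split p n k y) yk.
  have -> : (\sum_(i < p | i != k) y (wid i) = \sum_(i < p | i != k) x (wid i))%N.
    by apply: eq_bigr => i ik; rewrite yo // (inj_eq (@wid_inj p)).
  lia.
have ymax : y ord_max = x ord_max by rewrite yo // eq_sym wid_neq.
have Py : P y = 1.
  have := HA (cellof y); rewrite ffunE yk => /(_ nin).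
  rewrite Ccyc_cellof /HP; case: pickP => [w /eqP Pw|] //= [ew].
  have : (Tsum y + p + n - 1 = sv k x + cp k x + n)%N.
    have Ty' : (Tsum y + x (wid k) = Tsum x + cp k x)%N := Ty.
    rewrite /sv; have := @Tsum_split p n k x; lia.
  move=> h; rewrite h /cp modhelp ?ltn_ord // in ew.
  have ew' : w = y ord_max by apply: val_inj; rewrite /= ymax.
  by rewrite -{1}(@extend_cellof p n y) -ew'.
have ec := congr1 (fun z : pos p.+1 n => val (z (wid k))) (@line_uniq R p.+1 n P HL _ _ _ yl Px Py).
rewrite /= yk /= in ec.
by move: xin nin; rewrite /ins -ec => ->.
Qed.

Lemma diag_reindex p n (D : {set pos p.+1 n}) (hD : is_diagonal D) (i : 'I_p.+1)
  (F : 'I_n -> nat) : (\sum_(x in D) F (x i) = \sum_(y : 'I_n) F y)%N.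
Proof.
move: hD => /andP [/eqP cD /forall_inP hD].
have inj : {in D &, injective (fun x : pos p.+1 n => x i)}.
  move=> x y xD yD e; apply/eqP; apply/negPn/negP => nxy.
  have /forall_inP/(_ y yD)/implyP/(_ nxy)/forallP/(_ i) := hD x xD.
  by rewrite e eqxx.
rewrite -(big_imset _ inj).
have -> : [set x i | x : pos p.+1 n in D] = setT.
  by apply/eqP; rewrite eqEcard subsetT cardsT card_ord card_in_imset // cD leqnn.
by apply: (@eq_bigl _ _ addn) => y; rewrite in_setT.
Qed.

Lemma sum_ord_id n : ((\sum_(y < n) (y : nat)) * 2 = n * n.-1)%N.
Proof.
elim: n => [|n IH]; first by rewrite big_ord0.
rewrite big_ord_recr /= mulnDl IH; case: n {IH} => //= n; lia.
Qed.

Lemma win_sum n j r (G : nat -> nat) : (j + r <= n)%N ->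
  (\sum_(y < n) ((j <= y < j + r)%N * G y) = \sum_(t < r) G (j + t))%N.
Proof.
move=> hjr.
pose f y := ((j <= y < j + r)%N * G y)%N.
rewrite -(big_mkord xpredT f).
rewrite (@big_cat_nat _ _ _ j) //=; last by lia.
rewrite (@big_cat_nat _ _ _ (j + r) j) //=; last by lia.
have z1 : (\sum_(0 <= i < j) f i = 0)%N.
  rewrite big_nat_cond big1 // => y /andP[/andP[_ hy] _].
  by rewrite /f leqNgt hy.
have z2 : (\sum_(j + r <= i < n) f i = 0)%N.
  rewrite big_nat_cond big1 // => y /andP[/andP[hy _] _].
  by rewrite /f [(y < j + r)%N]ltnNge hy andbF.
rewrite z1 z2 add0n addn0.
rewrite -{1}[j]add0n big_addn addKn big_mkord.
apply: eq_bigr => t _; rewrite /f leq_addl /= addnC ltn_add2l ltn_ord mul1n.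
by [].
Qed.
Lemma arith (n p r j N S A B : nat) (Q : int) : ~~ odd n -> ~~ odd p ->
  (r * (r - 1) < n)%N -> (N * 2 = n * n.-1)%N -> (S * 2 = r * r.-1)%N ->
  B = (r * j + S)%N -> (r * j <= A <= r * (j + r - 1))%N ->
  (N%:Z - (p * N)%:Z - (p.-1 * n)%:Z) - (A%:Z - B%:Z) = Q * n%:Z -> (p = 0)%N \/ False.
Proof.
move=> hn hp hrn hN hS hB hA hQ.
case: p hp hQ => [|p] hp hQ; [by left|right].
have [m hm] : exists m, n = (m * 2)%N.
  exists n./2; have := odd_double_half n; rewrite (negbTE hn) add0n -muln2 => h; by rewrite h.
have [e he] : exists e, p.+1 = (e * 2)%N.
  exists p.+1./2; have := odd_double_half p.+1; rewrite (negbTE hp) add0n -muln2 => h; by rewrite h.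
subst n.
have hrr : (r * r.-1 = r * (r - 1))%N by rewrite subn1.
have hS2 : (S < m)%N by lia.
have hm0 : (0 < m)%N by lia.
have hN' : N = (m * (m * 2 - 1))%N.
  have : (m * 2 * (m * 2).-1 = m * (m * 2 - 1) * 2)%N by rewrite subn1 mulnAC.
  lia.
have hrj : (r * (j + r - 1) = r * j + r * (r - 1))%N.
  by case: (r) => [|r'] //=; rewrite !subn1 addnS /= mulnDr.
set W : int := A%:Z - B%:Z.
have hW1 : W <= S%:Z by rewrite /W; lia.
have hW2 : - S%:Z <= W by rewrite /W; lia.
set M : int := m%:Z; set E : int := e%:Z.
have h1 : N%:Z = M * (2 * M - 1).
  have h : (m * 2 - 1)%:Z = 2 * M - 1 by rewrite /M; lia.
  by rewrite hN' PoszM h.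
have h2 : (p.+1 * N)%:Z = 2 * E * N%:Z.
  have h : (p.+1)%:Z = 2 * E by rewrite /E; lia.
  by rewrite PoszM h.
have h3 : (p.+1.-1 * (m * 2))%:Z = (2 * E - 1) * (2 * M).
  have h : p%:Z = 2 * E - 1 by rewrite /E; lia.
  have h' : (m * 2)%:Z = 2 * M by rewrite /M; lia.
  by rewrite /= PoszM h h'.
rewrite h2 h3 -/W /M in hQ.
have hW : W = N%:Z - 2 * E * N%:Z - (2 * E - 1) * (2 * M) - Q * (2 * M).
  move: hQ; rewrite /M; lia.
set K : int := M - 2 * M * E - E - Q.
have hWK : W = M * (2 * K + 1) by rewrite hW h1 /K; ring.
have hM : 1 <= M by rewrite /M; lia.
have hSM : S%:Z + 1 <= M by rewrite /M; lia.
have [hK|hK] : 0 <= K \/ K <= -1 by lia.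
  have : 0 <= M * K by apply: mulr_ge0; lia.
  lia.
have : M * K <= M * (-1) by apply: ler_wpM2l; lia.
rewrite mulrN1.
lia.
Qed.

Lemma sumz (I : finType) (P : pred I) (F : I -> nat) :
  \sum_(i | P i) (F i)%:Z = (\sum_(i | P i) F i)%N%:Z.
Proof. by rewrite (big_morph Posz PoszD erefl). Qed.

Lemma core p n (k : 'I_p) (j r : nat) (D : {set pos p.+1 n}) :
  ~~ odd n -> ~~ odd p -> (2 <= p)%N -> (r * (r - 1) < n)%N -> (j + r <= n)%N ->
  is_diagonal D ->
  (forall x, x \in D -> (~~ ins k j r x -> val (x ord_max) = (Tsum x + p + n - 1) %% n)%N /\
                        (ins k j r x -> (j <= cp k x < j + r)%N)) -> False.
Proof.
move=> hn hp hp2 hrn hjr hD good.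
have cD : #|D| = n by case/andP: hD => /eqP.
have n0 : (0 < n)%N by lia.
pose N := (\sum_(y < n) (y : nat))%N.
have hN : (N * 2 = n * n.-1)%N := sum_ord_id n.
have SL : (\sum_(x in D) x ord_max = N)%N := @diag_reindex p n D hD ord_max (fun y => nat_of_ord y).
have ST : (\sum_(x in D) Tsum x = p * N)%N.
  rewrite /Tsum exchange_big /= (eq_bigr (fun _ => N)).
    by rewrite sum_nat_const card_ord.
  by move=> i _; exact: (@diag_reindex p n D hD (wid i) (fun y => nat_of_ord y)).
have CNT : (\sum_(x in D) ins k j r x = r)%N.
  have := etrans (@diag_reindex p n D hD (wid k) (fun y => ((j <= y < j + r)%N * 1)%N)) (@win_sum n j r (fun _ => 1%N) hjr).
  rewrite sum_nat_const card_ord muln1 => hh; apply: etrans hh.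
  by apply: eq_bigr => x _; rewrite muln1.
pose S := (\sum_(t < r) (t : nat))%N.
have hS : (S * 2 = r * r.-1)%N := sum_ord_id r.
have BB : (\sum_(x in D) ins k j r x * x (wid k) = r * j + S)%N.
  rewrite (etrans (@diag_reindex p n D hD (wid k) (fun y => ((j <= y < j + r)%N * y)%N)) (@win_sum n j r (fun y => y) hjr)).
  by rewrite big_split /= sum_nat_const card_ord.
have e1 : forall c, (\sum_(x in D) ins k j r x * c = r * c)%N.
  by move=> c; rewrite -big_distrl /= CNT.
have AA : (r * j <= \sum_(x in D) ins k j r x * cp k x <= r * (j + r - 1))%N.
  apply/andP; split.
    rewrite -e1; apply: leq_sum => x xD.
    case: (boolP (ins k j r x)) => h /=; rewrite ?mul1n ?mul0n //.
    by case/andP: ((good x xD).2 h).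
  rewrite -e1; apply: leq_sum => x xD.
  case: (boolP (ins k j r x)) => h /=; rewrite ?mul1n ?mul0n //.
  case/andP: ((good x xD).2 h) => _; lia.
pose e (x : pos p.+1 n) : int := (x ord_max : nat)%:Z - (Tsum x)%:Z - (p.-1)%:Z.
pose w (x : pos p.+1 n) : int :=
  (ins k j r x * cp k x)%N%:Z - (ins k j r x * x (wid k))%N%:Z.
have dv : forall x, x \in D -> (n%:Z %| e x - w x)%Z.
  move=> x xD; have [g1 g2] := good x xD.
  have hT := @Tsum_split p n k x.
  case: (boolP (ins k j r x)) => h.
    have hc := g2 h; apply/dvdzP.
    have hs := divn_eq (sv k x) n; have hsn := ltn_pmod (sv k x) n0.
    have hb := divn_eq (x ord_max + n - sv k x %% n) n.
    exists ((((x ord_max + n - sv k x %% n) %/ n)%N)%:Z - ((sv k x %/ n)%N)%:Z - 1).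
    rewrite /e /w h !mul1n /cp.
    have hsv : sv k x = (Tsum x - x (wid k) + p.-1)%N by [].
    move: hs hsn hb hsv.
    move: ((x ord_max + n - sv k x %% n) %/ n)%N ((x ord_max + n - sv k x %% n) %% n)%N => qb rb.
    move: (sv k x %/ n)%N (sv k x %% n)%N => qs rs.
    move: (sv k x) => s.
    rewrite !mulrBl mul1r -!PoszM.
    move: (qb * n)%N (qs * n)%N => Qb Qs.
    move: hT; move: (\sum_(i < p | i != k) x (wid i))%N (Tsum x) (nat_of_ord (x ord_max)) (nat_of_ord (x (wid k))) => Z T xo xk hT.
    move=> H1 H2 H3 H4.
    have hg : xo%:Z - T%:Z - (p.-1)%:Z - (rb%:Z - xk%:Z) = Qb%:Z - Qs%:Z - n%:Z by lia.
    exact: hg.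
  apply/dvdzP.
  have ho := g1 h.
  have ha := divn_eq (Tsum x + p + n - 1) n.
  exists (1 - (((Tsum x + p + n - 1) %/ n)%N)%:Z).
  rewrite /e /w (negbTE h) !mul0n subr0 ho mulrBl mul1r -PoszM.
  move: ha; move: ((Tsum x + p + n - 1) %/ n * n)%N ((Tsum x + p + n - 1) %% n)%N => Qa ra.
  move: (Tsum x) => T ha.
  have hg : ra%:Z - T%:Z - (p.-1)%:Z = n%:Z - Qa%:Z by lia.
  exact: hg.
have sumdv : (n%:Z %| \sum_(x in D) (e x - w x))%Z.
  by apply: rpred_sum => x xD; exact: dv.
move: sumdv; rewrite sumrB /e /w !sumrB !sumz SL ST BB sum_nat_const cD.
move=> /dvdzP [Q hQ].
have := @arith n p r j N S (\sum_(x in D) ins k j r x * cp k x)%N (r * j + S)%N Q hn hp hrn hN hS erefl AA.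
move: hQ; rewrite [(n * _)%N]mulnC => hQ.
move=> /(_ hQ); lia.
Qed.

Lemma Per_zero (R : realType) p n (k : 'I_p) (j r : nat) (A : mat R p.+1 n) :
  ~~ odd n -> ~~ odd p -> (2 <= p)%N -> (r * (r - 1) < n)%N -> (j + r <= n)%N ->
  (forall x, A x != 0 -> (~~ ins k j r x -> val (x ord_max) = (Tsum x + p + n - 1) %% n)%N /\
                        (ins k j r x -> (j <= cp k x < j + r)%N)) -> Per A = 0.
Proof.
move=> hn hp hp2 hrn hjr good; rewrite /Per; apply: big1 => D hD.
case: (boolP [exists x in D, A x == 0]) => [/exists_inP [x xD /eqP Ax] | hno].
  by rewrite (bigD1 x) //= Ax mul0r.
exfalso; apply: (@core p n k j r D hn hp hp2 hrn hjr hD) => x xD.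
apply: good; apply/eqP => Ax; move/negP: hno; apply; apply/exists_inP.
by exists x => //; rewrite Ax.
Qed.

Lemma good_of (R : realType) p n (k : 'I_p) (j r : nat) (P : mat R p.+1 n)
  (HL : Lambda1 P) (HA : @agrees_outside R p.+1 n k j r P) (x : pos p.+1 n) :
  (0 < p)%N -> P x != 0 ->
  (~~ ins k j r x -> val (x ord_max) = (Tsum x + p + n - 1) %% n)%N /\
  (ins k j r x -> (j <= cp k x < j + r)%N).
Proof.
move=> p0 nz; have Px : P x = 1 by case: (HL.1 x) => // h; rewrite h eqxx in nz.
split => h.
  exact: (@outside_good R p n k j r P HL HA x Px h).
exact: (@inside_good R p n k j r P HL HA x p0 Px h).
Qed.

Theorem theorem2p5 (R : realType) (n d r : nat) (k : 'I_d.-1) (j : nat)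
  (hn : ~~ odd n) (hd3 : (3 <= d)%N) (hdodd : odd d)
  (hr : (0 < r)%N) (hrn : (r * (r - 1) < n)%N) (hj : (j + r <= n)%N) :
  (forall P : mat R d n, Lambda1 P -> agrees_outside k j r P -> Per P = 0) /\
  (forall (m : nat) (a : 'I_m -> R) (Ps : 'I_m -> mat R d n),
     (forall i, Lambda1 (Ps i)) -> (forall i, agrees_outside k j r (Ps i)) ->
     Per (fun x => \sum_(i < m) a i * Ps i x) = 0).
Proof.
case: d k hd3 hdodd => [//|p] k hd3 hdodd.
have hp : ~~ odd p by move: hdodd => /=.
have hp2 : (2 <= p)%N by [].
have p0 : (0 < p)%N by lia.
split.
  move=> P HL HA; apply: (@Per_zero R p n k j r P hn hp hp2 hrn hj) => x nz.
  exact: (@good_of R p n k j r P HL HA x p0 nz).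
move=> m a Ps HL HA.
apply: (@Per_zero R p n k j r _ hn hp hp2 hrn hj) => x nz.
case: (boolP [exists i, Ps i x != 0]) => [/existsP [i hi] | hno].
  exact: (@good_of R p n k j r (Ps i) (HL i) (HA i) x p0 hi).
exfalso; move/eqP: nz; apply; apply: big1 => i _.
have -> : Ps i x = 0 by apply/eqP; move/negP: hno => hno; apply/negPn/negP => h; apply: hno; apply/existsP; exists i.
by rewrite mulr0.
Qed.
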